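(* Let $k\ge1$ and let real numbers $\eta_1,\dots,\eta_k$ satisfy $\eta_1+\cdots+\eta_k=1$ and $\eta_k\ge\eta_{k-1}\ge\cdots\ge\eta_1>0$. Then there exist sequences of positive integers $(a_{n,j})_{n\ge1}$, $1\le j\le k$, with $a_{1,1}<a_{1,2}<\cdots<a_{1,k}<a_{2,1}<\cdots<a_{2,k}<a_{3,1}<\cdots$, $$\lim_{n\to\infty}\frac{a_{n+1,1}-a_{n,k}}{a_{n+1,k}}=\eta_1,\qquad\lim_{n\to\infty}\frac{a_{n,i}-a_{n,i-1}}{a_{n,k}}=\eta_i\ (2\le i\le k),\qquad\lim_{n\to\infty}\frac{a_{n+1,1}}{a_{n,k}}=\infty,$$ such that, with $\zeta_j=\sum_{n\ge1}2^{-a_{n,j}}$, the set $\{1,\zeta_1,\dots,\zeta_k\}$ is linearly independent over $\mathbb{Q}$. *)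

(* Defs.v *)
From Stdlib Require Import Reals QArith Qreals.
From Coquelicot Require Import Coquelicot.
Open Scope R_scope.

Definition zeta (a : nat -> nat -> nat) (j : nat) : R :=
  Series (fun m : nat => / 2 ^ (a (S m) j)).

Definition Q_lin_indep (k : nat) (x : nat -> R) : Prop :=
  forall q : nat -> Q,
    sum_f_R0 (fun j => Q2R (q j) * x j) k = 0 ->
    forall j, (j <= k)%nat -> (q j == 0)%Q.

(* Main.v *)
Require Import Defs.
From Stdlib Require Import Reals QArith Qreals Lia Lra ZArith.
From Coquelicot Require Import Coquelicot.
Open Scope R_scope.

Definition fl (x : R) : nat := Z.to_nat (Int_part x).

Lemma INR_to_nat z : (0 <= z)%Z -> INR (Z.to_nat z) = IZR z.
Proof. intros H. rewrite INR_IZR_INZ, Z2Nat.id; auto. Qed.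

Lemma fl_spec x : 0 <= x -> INR (fl x) <= x < INR (fl x) + 1.
Proof.
  intros Hx. destruct (base_Int_part x) as [H1 H2].
  assert (H0 : (0 <= Int_part x)%Z).
  { assert (-1 < IZR (Int_part x)) by lra.
    apply (lt_IZR (-1)) in H. lia. }
  unfold fl. rewrite INR_to_nat by auto. lra.
Qed.

Lemma fl_ge x m : 0 <= x -> INR m <= x -> (m <= fl x)%nat.
Proof.
  intros Hx Hm. destruct (le_lt_dec m (fl x)) as [h|h]; auto.
  exfalso. apply le_INR in h. rewrite S_INR in h. pose proof (fl_spec x Hx). lra.
Qed.

Lemma fl_INR m : fl (INR m) = m.
Proof.
  apply Nat.le_antisymm.
  - pose proof (fl_spec (INR m) (pos_INR m)) as [h _]. apply INR_le. lra.
  - apply fl_ge; [apply pos_INR | lra].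
Qed.

Lemma fl_le x y : 0 <= x -> x <= y -> (fl x <= fl y)%nat.
Proof. intros. apply fl_ge; [lra|]. pose proof (fl_spec x H). lra. Qed.

Lemma fl_add x y : 0 <= x -> 0 <= y -> (fl x + fl y <= fl (x + y))%nat.
Proof.
  intros. apply fl_ge; [lra|]. rewrite plus_INR.
  pose proof (fl_spec x H). pose proof (fl_spec y H0). lra.
Qed.

Lemma nat_unbounded r : exists N, r < INR N.
Proof.
  destruct (archimed r) as [H1 _].
  destruct (Z_le_gt_dec 0 (up r)) as [h|h].
  - exists (Z.to_nat (up r)). rewrite INR_to_nat; auto.
  - exists 0%nat. simpl. apply Z.gt_lt in h. apply IZR_lt in h. lra.
Qed.

Lemma pow2_ge n : 1 + INR n <= 2 ^ n.
Proof.
  induction n; [simpl; lra|]. rewrite S_INR. cbn [pow].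
  assert (0 <= INR n) by apply pos_INR. lra.
Qed.

Fixpoint AA (k : nat) (n : nat) : nat :=
  match n with O => 0 | S n => AA k n + k + S n * (AA k n + 1) end.
Definition PP k n := (S n * (AA k n + 1))%nat.
Definition ss (eta : nat -> R) (j : nat) : R :=
  match j with O => 0 | S j' => sum_f_R0 (fun i => eta (S i)) j' end.
Definition aa k eta (n j : nat) : nat :=
  match n with O => 0%nat | S n => (AA k n + j + fl (ss eta j * INR (PP k n)))%nat end.

Lemma AA_S k n : AA k (S n) = (AA k n + k + PP k n)%nat.
Proof. reflexivity. Qed.

Lemma ss_S eta j : ss eta (S j) = ss eta j + eta (S j).
Proof. destruct j; simpl; lra. Qed.

Lemma PP_ge k n : (S n <= PP k n)%nat.
Proof. unfold PP. nia. Qed.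

Lemma INR_PP k n : INR (PP k n) = INR (S n) * (INR (AA k n) + 1).
Proof. unfold PP. rewrite mult_INR, plus_INR. simpl INR at 3. auto. Qed.
Lemma lim_ratio (P num den d : nat -> R) (c C : R) :
  (forall n, INR (S n) <= P n) -> (forall n, Rabs (num n - c * P n) <= C) ->
  (forall n, den n = P n + d n) -> (forall n, 0 <= d n) ->
  is_lim_seq (fun n => d n / P n) 0 -> is_lim_seq (fun n => num n / den n) c.
Proof.
  intros HP He Hden Hd Hdl.
  assert (Hpos : forall n, 0 < P n).
  { intros n. pose proof (HP n). rewrite S_INR in H. pose proof (pos_INR n). lra. }
  assert (HPi : is_lim_seq P p_infty).
  { apply is_lim_seq_le_p_loc with (u := fun n => INR (S n)).
    - exists 0%nat. intros; auto.
    - apply (is_lim_seq_incr_1 INR p_infty). apply is_lim_seq_INR. }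
  assert (Hinv : is_lim_seq (fun n => / P n) 0).
  { replace (Finite 0) with (Rbar_inv p_infty) by reflexivity.
    apply is_lim_seq_inv; auto. discriminate. }
  assert (HC : forall a, is_lim_seq (fun n => a * / P n) 0).
  { intros a. replace (Finite 0) with (Rbar_mult a 0) by (simpl; f_equal; ring).
    apply is_lim_seq_scal_l. auto. }
  assert (He0 : is_lim_seq (fun n => (num n - c * P n) / P n) 0).
  { apply is_lim_seq_le_le with (u := fun n => (- C) * / P n) (w := fun n => C * / P n); auto.
    intros n. pose proof (He n). pose proof (Hpos n). unfold Rdiv.
    apply Rabs_le_between in H.
    split; apply Rmult_le_compat_r; try (left; apply Rinv_0_lt_compat; auto); lra. }
  assert (H1 : is_lim_seq (fun n => c + (num n - c * P n) / P n) (c + 0)).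
  { apply is_lim_seq_plus'; auto. apply is_lim_seq_const. }
  assert (H2 : is_lim_seq (fun n => 1 + d n / P n) (1 + 0)).
  { apply is_lim_seq_plus'; auto. apply is_lim_seq_const. }
  pose proof (is_lim_seq_div' _ _ _ _ H1 H2 ltac:(lra)) as H3.
  replace (Finite c) with (Finite ((c + 0) / (1 + 0))) by (f_equal; field).
  eapply is_lim_seq_ext; [|exact H3].
  intros n. simpl. rewrite Hden. pose proof (Hpos n). pose proof (Hd n). field. lra.
Qed.
Definition isZ (x : R) := exists z : Z, x = IZR z.

Lemma isZ_plus x y : isZ x -> isZ y -> isZ (x + y).
Proof. intros [a ->] [b ->]. exists (a + b)%Z. now rewrite plus_IZR. Qed.
Lemma isZ_mult x y : isZ x -> isZ y -> isZ (x * y).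
Proof. intros [a ->] [b ->]. exists (a * b)%Z. now rewrite mult_IZR. Qed.
Lemma isZ_opp x : isZ x -> isZ (- x).
Proof. intros [a ->]. exists (- a)%Z. now rewrite opp_IZR. Qed.
Lemma isZ_IZR z : isZ (IZR z).
Proof. now exists z. Qed.
Lemma isZ_pow2 n : isZ (2 ^ n).
Proof. exists (2 ^ Z.of_nat n)%Z. now rewrite <- pow_IZR. Qed.
Lemma isZ_sum f n : (forall i, (i <= n)%nat -> isZ (f i)) -> isZ (sum_f_R0 f n).
Proof.
  induction n; intros H; simpl.
  - apply H; lia.
  - apply isZ_plus; [apply IHn; intros; apply H; lia | apply H; lia].
Qed.

Lemma isZ_small x : isZ x -> Rabs x < 1 -> x = 0.
Proof.
  intros [z ->] Hz. rewrite Rabs_Zabs in Hz. apply lt_IZR in Hz.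
  assert (z = 0%Z) by lia. subst. reflexivity.
Qed.

Lemma pow2_pos n : 0 < 2 ^ n.
Proof. apply pow_lt; lra. Qed.

Lemma pow2_split B e G : (e + G <= B)%nat -> 2 ^ B / 2 ^ e = 2 ^ G * 2 ^ (B - e - G).
Proof.
  intros H. replace B with (e + (G + (B - e - G)))%nat at 1 by lia.
  rewrite !pow_add. pose proof (pow2_pos e). field. lra.
Qed.

Lemma fin_lemma m : forall (c : nat -> Z) (b : nat -> nat) (G : nat),
  (forall i, (i < m)%nat -> (b i + G <= b (S i))%nat) ->
  (forall i, (i <= m)%nat -> Rabs (IZR (c i)) < 2 ^ G) ->
  sum_f_R0 (fun i => IZR (c i) / 2 ^ (b i)) m = 0 ->
  forall i, (i <= m)%nat -> c i = 0%Z.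
Proof.
  induction m; intros c b G Hgap Hc Hsum i Hi.
  - replace i with 0%nat by lia. simpl in Hsum. pose proof (pow2_pos (b 0%nat)).
    apply eq_IZR. unfold Rdiv in Hsum. apply Rmult_integral in Hsum as [h|h]; auto.
    exfalso. apply Rinv_neq_0_compat in h; auto. lra.
  - assert (Hmono : forall j j', (j <= j' <= S m)%nat -> (b j <= b j')%nat).
    { intros j j' Hj. induction j'.
      - replace j with 0%nat by lia. lia.
      - destruct (Nat.eq_dec j (S j')) as [->|hne]; [lia|].
        pose proof (Hgap j' ltac:(lia)). pose proof (IHj' ltac:(lia)). lia. }
    set (B := b (S m)).
    assert (Hle : forall i, (i <= m)%nat -> (b i + G <= B)%nat).
    { intros j Hj. pose proof (Hgap j ltac:(lia)). pose proof (Hmono (S j) (S m) ltac:(lia)). unfold B. lia. }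
    set (X := sum_f_R0 (fun i => IZR (c i) / 2 ^ (b i)) m).
    assert (HX : 2 ^ B * X = 2 ^ G * sum_f_R0 (fun i => IZR (c i) * 2 ^ (B - b i - G)) m).
    { unfold X. rewrite !scal_sum. apply sum_eq. intros j Hj.
      unfold Rdiv. rewrite Rmult_assoc, (Rmult_comm (/ _)).
      change (2 ^ B * / 2 ^ b j) with (2 ^ B / 2 ^ b j). rewrite (pow2_split B (b j) G) by (apply Hle; auto). ring. }
    destruct (isZ_sum (fun i => IZR (c i) * 2 ^ (B - b i - G)) m) as [K HK].
    { intros j _. apply isZ_mult; [apply isZ_IZR | apply isZ_pow2]. }
    rewrite tech5 in Hsum. fold X in Hsum.
    assert (Hcm : IZR (c (S m)) = - (2 ^ G * IZR K)).
    { pose proof (pow2_pos B). unfold B in *. rewrite <- HK, <- HX.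
      replace X with (- (IZR (c (S m)) / 2 ^ b (S m))) by lra. field. lra. }
    assert (Hc0 : c (S m) = 0%Z).
    { destruct (Z.eq_dec K 0) as [->|hK].
      - apply eq_IZR. rewrite Hcm. simpl. ring.
      - exfalso. pose proof (Hc (S m) ltac:(lia)) as h. rewrite Hcm, Rabs_Ropp, Rabs_mult in h.
        rewrite (Rabs_pos_eq (2 ^ G)) in h by (left; apply pow2_pos).
        rewrite Rabs_Zabs in h. assert (1 <= IZR (Z.abs K)) by (apply IZR_le; lia).
        pose proof (pow2_pos G). nra. }
    destruct (Nat.eq_dec i (S m)) as [->|hne]; auto.
    apply (IHm c b G).
    + intros j Hj. apply Hgap. lia.
    + intros j Hj. apply Hc. lia.
    + rewrite Hc0 in Hsum. unfold X in Hsum. unfold Rdiv in Hsum. rewrite Rmult_0_l in Hsum. lra.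
    + lia.
Qed.

Lemma inv_pow2_le e f : (f <= e)%nat -> / 2 ^ e <= / 2 ^ f.
Proof. intros. apply Rinv_le_contravar; [apply pow2_pos|]. apply Rle_pow; [lra|auto]. Qed.

Lemma pow2_div B e : (e <= B)%nat -> 2 ^ B / 2 ^ e = 2 ^ (B - e).
Proof.
  intros H. replace B with (e + (B - e))%nat at 1 by lia.
  rewrite pow_add. pose proof (pow2_pos e). field. lra.
Qed.

Lemma geom_ex c : ex_series (fun m => c * (/2) ^ m).
Proof.
  apply (ex_series_scal_l c (fun m => (/2) ^ m)). apply ex_series_geom.
  rewrite Rabs_pos_eq; lra.
Qed.

Lemma sum_ge_term f n i : (forall j, (j <= n)%nat -> 0 <= f j) -> (i <= n)%nat -> f i <= sum_f_R0 f n.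
Proof.
  revert i. induction n; intros i H Hi.
  - replace i with 0%nat by lia. simpl. lra.
  - rewrite tech5. destruct (Nat.eq_dec i (S n)) as [->|hne].
    + pose proof (IHn 0%nat (fun j hj => H j ltac:(lia)) ltac:(lia)). pose proof (H 0%nat ltac:(lia)). lra.
    + pose proof (IHn i (fun j hj => H j ltac:(lia)) ltac:(lia)). pose proof (H (S n) ltac:(lia)). lra.
Qed.

Lemma clear_den (q : nat -> Q) (n : nat) : exists (D : Z) (z : nat -> Z),
  (0 < D)%Z /\ forall j, (j <= n)%nat -> Q2R (q j) * IZR D = IZR (z j).
Proof.
  induction n.
  - exists (Zpos (Qden (q 0%nat))), (fun _ => Qnum (q 0%nat)). split; [lia|].
    intros j Hj. replace j with 0%nat by lia. unfold Q2R.
    assert (IZR (Z.pos (Qden (q 0%nat))) <> 0) by (apply IZR_neq; discriminate).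
    field. auto.
  - destruct IHn as [D [z [HD Hz]]].
    exists (D * Zpos (Qden (q (S n))))%Z,
      (fun j => if (j <=? n)%nat then (z j * Zpos (Qden (q (S n))))%Z else (Qnum (q (S n)) * D)%Z).
    split; [lia|]. intros j Hj.
    destruct (Nat.leb_spec j n) as [h|h]; rewrite !mult_IZR.
    + rewrite <- (Hz j h). ring.
    + replace j with (S n) by lia. unfold Q2R.
      assert (IZR (Z.pos (Qden (q (S n)))) <> 0) by (apply IZR_neq; discriminate).
      field. auto.
Qed.
Lemma lim_a_Sn a : is_lim_seq (fun n => a / INR (S n)) 0.
Proof.
  assert (Hinv : is_lim_seq (fun n => / INR (S n)) 0).
  { replace (Finite 0) with (Rbar_inv p_infty) by reflexivity.
    apply is_lim_seq_inv; [|discriminate].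
    apply (is_lim_seq_incr_1 INR p_infty). apply is_lim_seq_INR. }
  replace (Finite 0) with (Rbar_mult a 0) by (simpl; f_equal; ring).
  apply is_lim_seq_scal_l. auto.
Qed.

Section Facts.
Variables (k : nat) (eta : nat -> R).
Hypothesis Hk : (1 <= k)%nat.
Hypothesis Hs : ss eta k = 1.
Hypothesis He : forall i, (1 <= i <= k)%nat -> eta 1%nat <= eta i.
Hypothesis H1 : 0 < eta 1%nat.

Lemma ss_mono j : (j <= k)%nat -> forall i, (i <= j)%nat -> ss eta i <= ss eta j.
Proof.
  induction j; intros Hj i Hi.
  - replace i with 0%nat by lia. lra.
  - destruct (Nat.eq_dec i (S j)) as [->|hne]; [lra|].
    rewrite ss_S. assert (0 < eta (S j)) by (pose proof (He (S j)); assert (eta 1%nat <= eta (S j)) by (apply He; lia); lra).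
    pose proof (IHj ltac:(lia) i ltac:(lia)). lra.
Qed.

Lemma ss_bounds j : (j <= k)%nat -> 0 <= ss eta j <= 1.
Proof.
  intros Hj. split.
  - apply (ss_mono j Hj 0%nat). lia.
  - rewrite <- Hs. apply ss_mono; auto.
Qed.

Lemma aa_k n : aa k eta n k = AA k n.
Proof.
  destruct n; [reflexivity|]. simpl aa. rewrite Hs, Rmult_1_l, fl_INR. reflexivity.
Qed.

Lemma aa_le_AA n j : (j <= k)%nat -> (aa k eta (S n) j <= AA k (S n))%nat.
Proof.
  intros Hj. simpl aa. rewrite AA_S.
  assert (fl (ss eta j * INR (PP k n)) <= PP k n)%nat.
  { rewrite <- (fl_INR (PP k n)) at 2. pose proof (ss_bounds j Hj). pose proof (pos_INR (PP k n)).
    apply fl_le; nra. }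
  lia.
Qed.

Lemma aa_ge_AA n j : (AA k n + j <= aa k eta (S n) j)%nat.
Proof. simpl. lia. Qed.

Definition GG n := S (fl (eta 1%nat * INR (PP k n))).

Lemma GG_gt n : eta 1%nat * INR (PP k n) < INR (GG n).
Proof.
  unfold GG. rewrite S_INR. pose proof (pos_INR (PP k n)).
  pose proof (fl_spec (eta 1%nat * INR (PP k n))). nra.
Qed.

Lemma aa1 n : aa k eta (S n) 1 = (AA k n + GG n)%nat.
Proof. unfold GG. simpl. lia. Qed.

Lemma aa_gap n j : (1 <= j < k)%nat -> (aa k eta (S n) j + GG n <= aa k eta (S n) (S j))%nat.
Proof.
  intros Hj. unfold aa, GG. rewrite ss_S.
  pose proof (ss_bounds j ltac:(lia)). pose proof (pos_INR (PP k n)).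
  assert (eta 1%nat <= eta (S j)) by (apply He; lia).
  assert (fl (ss eta j * INR (PP k n)) + fl (eta 1%nat * INR (PP k n)) <=
          fl ((ss eta j + eta (S j)) * INR (PP k n)))%nat.
  { eapply Nat.le_trans; [apply fl_add; nra|]. apply fl_le; nra. }
  lia.
Qed.

Lemma aa_incr n j : (1 <= j <= k)%nat -> (aa k eta (S n) j + 1 <= aa k eta (S (S n)) j)%nat.
Proof.
  intros Hj. pose proof (aa_le_AA n j ltac:(lia)). pose proof (aa_ge_AA (S n) j). lia.
Qed.

Lemma INR_AA_S n : INR (AA k (S n)) = INR (PP k n) + (INR (AA k n) + INR k).
Proof. rewrite AA_S, !plus_INR. ring. Qed.

Lemma dP_lim : is_lim_seq (fun n => (INR (AA k n) + INR k) / INR (PP k n)) 0.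
Proof.
  apply is_lim_seq_le_le with (u := fun _ => 0) (w := fun n => INR k / INR (S n)).
  - intros n. rewrite INR_PP. pose proof (pos_INR (AA k n)).
    assert (1 <= INR k) by (apply (le_INR 1); auto).
    assert (0 < INR (S n)) by (apply lt_0_INR; lia).
    split.
    + apply Rle_mult_inv_pos; [lra|]. nra.
    + unfold Rdiv. rewrite Rinv_mult.
      apply Rle_trans with (INR k * / INR (S n) * ((INR (AA k n) + INR k) / INR k * / (INR (AA k n) + 1))).
      * right. field. lra.
      * rewrite <- (Rmult_1_r (INR k * / INR (S n))) at 2. apply Rmult_le_compat_l.
        -- apply Rle_mult_inv_pos; lra.
        -- apply Rmult_le_reg_r with (INR k * (INR (AA k n) + 1)); [nra|].
           field_simplify; try lra. nra.
  - apply is_lim_seq_const.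
  - apply lim_a_Sn.
Qed.

Lemma lim4 : is_lim_seq (fun n => (INR (aa k eta (S n) 1%nat) - INR (aa k eta n k)) / INR (aa k eta (S n) k))
      (eta 1%nat).
Proof.
  apply is_lim_seq_ext with (u := fun n => INR (GG n) / (INR (PP k n) + (INR (AA k n) + INR k))).
  { intros n. rewrite !aa_k, aa1, INR_AA_S, plus_INR. unfold Rdiv. ring. }
  apply lim_ratio with (P := fun n => INR (PP k n)) (d := fun n => INR (AA k n) + INR k) (C := 1).
  - intros n. apply le_INR, PP_ge.
  - intros n. unfold GG. rewrite S_INR.
    pose proof (pos_INR (PP k n)).
    pose proof (fl_spec (eta 1%nat * INR (PP k n)) ltac:(nra)).
    apply Rabs_le; lra.
  - intros n. reflexivity.
  - intros n. pose proof (pos_INR (AA k n)). pose proof (pos_INR k). lra.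
  - apply dP_lim.
Qed.

Lemma lim5 i : (2 <= i <= k)%nat ->
  is_lim_seq (fun n => (INR (aa k eta n i) - INR (aa k eta n (pred i))) / INR (aa k eta n k)) (eta i).
Proof.
  intros Hi. apply is_lim_seq_incr_1.
  destruct i as [|i']; [lia|]. simpl pred.
  apply is_lim_seq_ext with (u := fun n => (INR (aa k eta (S n) (S i')) - INR (aa k eta (S n) i')) / (INR (PP k n) + (INR (AA k n) + INR k))).
  { intros n. rewrite aa_k, INR_AA_S. reflexivity. }
  apply lim_ratio with (P := fun n => INR (PP k n)) (d := fun n => INR (AA k n) + INR k) (C := 2).
  - intros n. apply le_INR, PP_ge.
  - intros n. unfold aa. rewrite !plus_INR, ss_S, S_INR.
    pose proof (pos_INR (PP k n)).
    pose proof (ss_bounds i' ltac:(lia)).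
    assert (eta 1%nat <= eta (S i')) by (apply He; lia).
    pose proof (fl_spec (ss eta i' * INR (PP k n)) ltac:(nra)).
    pose proof (fl_spec ((ss eta i' + eta (S i')) * INR (PP k n)) ltac:(nra)).
    apply Rabs_le; nra.
  - intros n. reflexivity.
  - intros n. pose proof (pos_INR (AA k n)). pose proof (pos_INR k). lra.
  - apply dP_lim.
Qed.

Lemma lim6 : is_lim_seq (fun n => INR (aa k eta (S n) 1%nat) / INR (aa k eta n k)) p_infty.
Proof.
  apply is_lim_seq_le_p_loc with (u := fun n => eta 1%nat * INR (S n)).
  - exists 1%nat. intros n Hn. rewrite aa_k, aa1.
    destruct n as [|m]; [exfalso; unfold ge in Hn; apply Nat.nle_succ_0 in Hn; exact Hn|].
    pose proof (GG_gt (S m)) as HG.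
    rewrite INR_PP in HG.
    assert (HA : 1 <= INR (AA k (S m))) by (apply (le_INR 1); rewrite AA_S; lia).
    apply (proj1 (Rle_div_r (eta 1%nat * INR (S (S m))) _ (INR (AA k (S m))) ltac:(lra))). rewrite plus_INR.
    pose proof (pos_INR (S (S m))). pose proof (pos_INR (AA k (S m))).
    assert (0 <= eta 1%nat * INR (S (S m))) by nra.
    assert (eta 1%nat * INR (S (S m)) * INR (AA k (S m)) <= eta 1%nat * (INR (S (S m)) * (INR (AA k (S m)) + 1))) by nra.
    lra.
  - replace p_infty with (Rbar_mult (eta 1%nat) p_infty).
    + apply is_lim_seq_scal_l. apply (is_lim_seq_incr_1 INR p_infty). apply is_lim_seq_INR.
    + simpl. destruct (Rle_dec 0 (eta 1%nat)); [|lra].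
      destruct (Rle_lt_or_eq_dec 0 (eta 1%nat) r); [reflexivity|lra].
Qed.


Definition tt j N := Series (fun m => / 2 ^ aa k eta (S (N + m)) j).

Lemma aa_mono_j n i j : (1 <= i <= j)%nat -> (j <= k)%nat -> (aa k eta (S n) i <= aa k eta (S n) j)%nat.
Proof.
  intros Hi Hj. simpl. pose proof (ss_mono j Hj i ltac:(lia)). pose proof (ss_bounds i ltac:(lia)).
  pose proof (pos_INR (PP k n)).
  assert (fl (ss eta i * INR (PP k n)) <= fl (ss eta j * INR (PP k n)))%nat by (apply fl_le; nra).
  lia.
Qed.

Lemma aa_shift N m j : (1 <= j <= k)%nat -> (aa k eta (S N) j + m <= aa k eta (S (N + m)) j)%nat.
Proof.
  intros Hj. induction m.
  - rewrite !Nat.add_0_r; lia.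
  - replace (N + S m)%nat with (S (N + m)) by lia. pose proof (aa_incr (N + m) j Hj). lia.
Qed.

Lemma tt_term_bound j N m : (1 <= j <= k)%nat ->
  0 <= / 2 ^ aa k eta (S (N + m)) j <= / 2 ^ aa k eta (S N) j * (/2) ^ m.
Proof.
  intros Hj. split.
  - left; apply Rinv_0_lt_compat, pow2_pos.
  - rewrite pow_inv, <- Rinv_mult, <- pow_add. apply inv_pow2_le, aa_shift; auto.
Qed.

Lemma tt_ex j N : (1 <= j <= k)%nat -> ex_series (fun m => / 2 ^ aa k eta (S (N + m)) j).
Proof.
  intros Hj. apply (@ex_series_le R_AbsRing R_CompleteNormedModule) with (b := fun m => / 2 ^ aa k eta (S N) j * (/2) ^ m).
  - intros m. replace (norm (/ 2 ^ aa k eta (S (N + m)) j)) with (Rabs (/ 2 ^ aa k eta (S (N + m)) j)) by reflexivity.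
    pose proof (tt_term_bound j N m Hj). rewrite Rabs_pos_eq; lra.
  - apply geom_ex.
Qed.

Lemma tt_bound j N : (1 <= j <= k)%nat -> 0 <= tt j N <= 2 * / 2 ^ aa k eta (S N) j.
Proof.
  intros Hj. unfold tt. split.
  - apply Rle_trans with (Series (fun m => 0 * (/2) ^ m)).
    + rewrite Series_scal_l. lra.
    + apply Series_le; [|apply tt_ex; auto].
      intros m. rewrite Rmult_0_l. pose proof (tt_term_bound j N m Hj). lra.
  - apply Rle_trans with (Series (fun m => / 2 ^ aa k eta (S N) j * (/2) ^ m)).
    + apply Series_le; [|apply geom_ex]. intros m. apply tt_term_bound; auto.
    + rewrite Series_scal_l, Series_geom by (rewrite Rabs_pos_eq; lra).
      pose proof (pow2_pos (aa k eta (S N) j)). right. field. lra.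
Qed.

Lemma tt_step j N : (1 <= j <= k)%nat -> tt j N = / 2 ^ aa k eta (S N) j + tt j (S N).
Proof.
  intros Hj. unfold tt. rewrite Series_incr_1 by (apply tt_ex; auto).
  rewrite Nat.add_0_r. f_equal. apply Series_ext. intros m. rewrite Nat.add_succ_r. reflexivity.
Qed.

Lemma indep (c : nat -> Z) (z0 : Z) :
  IZR z0 + sum_f_R0 (fun i => IZR (c i) * zeta (aa k eta) (S i)) (pred k) = 0 ->
  (forall i, (i <= pred k)%nat -> c i = 0%Z) /\ z0 = 0%Z.
Proof.
  intros Hsum.
  set (W N := sum_f_R0 (fun i => IZR (c i) * tt (S i) N) (pred k)).
  assert (W0 : W 0%nat = - IZR z0).
  { change (IZR z0 + W 0%nat = 0) in Hsum. lra. }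
  assert (WS : forall N, W N = sum_f_R0 (fun i => IZR (c i) * / 2 ^ aa k eta (S N) (S i)) (pred k) + W (S N)).
  { intros N. unfold W. rewrite <- sum_plus. apply sum_eq. intros i Hi.
    rewrite (tt_step (S i) N) by lia. ring. }
  assert (Wint : forall N, isZ (2 ^ AA k N * W N)).
  { induction N.
    - simpl. rewrite W0. exists (- z0)%Z. rewrite opp_IZR. ring.
    - rewrite (WS N) in IHN.
      set (Sg := sum_f_R0 (fun i => IZR (c i) * / 2 ^ aa k eta (S N) (S i)) (pred k)) in *.
      assert (E1 : 2 ^ AA k (S N) = 2 ^ (AA k (S N) - AA k N) * 2 ^ AA k N).
      { rewrite <- pow_add. f_equal. rewrite AA_S. lia. }
      assert (E2 : 2 ^ AA k (S N) * Sg =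
          sum_f_R0 (fun i => IZR (c i) * 2 ^ (AA k (S N) - aa k eta (S N) (S i))) (pred k)).
      { unfold Sg. rewrite scal_sum. apply sum_eq. intros i Hi.
        pose proof (aa_le_AA N (S i) ltac:(lia)).
        rewrite <- pow2_div by auto. unfold Rdiv. ring. }
      replace (2 ^ AA k (S N) * W (S N)) with
        (2 ^ (AA k (S N) - AA k N) * (2 ^ AA k N * (Sg + W (S N))) + - (2 ^ AA k (S N) * Sg))
        by (rewrite E1; ring).
      rewrite E2. apply isZ_plus.
      + apply isZ_mult; [apply isZ_pow2 | exact IHN].
      + apply isZ_opp, isZ_sum. intros. apply isZ_mult; [apply isZ_IZR | apply isZ_pow2]. }
  set (Zs := sum_f_R0 (fun i => Rabs (IZR (c i))) (pred k)).
  assert (Zs_ge : forall i, (i <= pred k)%nat -> Rabs (IZR (c i)) <= Zs).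
  { intros i Hi. apply (sum_ge_term (fun i => Rabs (IZR (c i)))); auto. intros; apply Rabs_pos. }
  assert (Zs0 : 0 <= Zs) by (pose proof (Zs_ge 0%nat ltac:(lia)); pose proof (Rabs_pos (IZR (c 0%nat))); lra).
  assert (Wbound : forall N, Rabs (2 ^ AA k N * W N) <= 2 * Zs / 2 ^ GG N).
  { intros N. rewrite Rabs_mult, (Rabs_pos_eq (2 ^ AA k N)) by (left; apply pow2_pos).
    assert (H : Rabs (W N) <= (2 * / 2 ^ aa k eta (S N) 1) * Zs).
    { unfold W. eapply Rle_trans; [apply sum_f_R0_triangle|]. unfold Zs. rewrite scal_sum. apply sum_Rle.
      intros i Hi. rewrite Rabs_mult. pose proof (tt_bound (S i) N ltac:(lia)) as [h1 h2].
      rewrite (Rabs_pos_eq (tt _ _)) by auto.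
      pose proof (inv_pow2_le (aa k eta (S N) (S i)) (aa k eta (S N) 1) (aa_mono_j N 1 (S i) ltac:(lia) ltac:(lia))).
      apply Rmult_le_compat_l; [apply Rabs_pos| lra]. }
    rewrite aa1, pow_add in H.
    pose proof (pow2_pos (AA k N)). pose proof (pow2_pos (GG N)).
    apply Rle_trans with (2 ^ AA k N * ((2 * / (2 ^ AA k N * 2 ^ GG N)) * Zs)).
    - apply Rmult_le_compat_l; [lra | auto].
    - right. field. lra. }
  assert (Wz : forall N, 2 * Zs + 1 < 2 ^ GG N -> W N = 0).
  { intros N HN. pose proof (Wbound N). pose proof (pow2_pos (GG N)).
    assert (2 * Zs / 2 ^ GG N < 1).
    { apply (Rmult_lt_reg_r (2 ^ GG N)); auto. unfold Rdiv.
      rewrite Rmult_assoc, Rinv_l by lra. lra. }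
    pose proof (isZ_small _ (Wint N) ltac:(lra)) as h.
    pose proof (pow2_pos (AA k N)). apply Rmult_integral in h as [h|h]; auto. lra. }
  destruct (nat_unbounded ((2 * Zs + 1) / eta 1%nat)) as [N0 HN0].
  assert (Hbig : forall N, (N0 <= N)%nat -> 2 * Zs + 1 < 2 ^ GG N).
  { intros N HN. pose proof (pow2_ge (GG N)). pose proof (GG_gt N).
    pose proof (le_INR _ _ (PP_ge k N)). pose proof (le_INR N0 (S N) ltac:(lia)).
    assert (E : eta 1%nat * ((2 * Zs + 1) / eta 1%nat) = 2 * Zs + 1) by (field; lra).
    assert (eta 1%nat * ((2 * Zs + 1) / eta 1%nat) < eta 1%nat * INR N0) by (apply Rmult_lt_compat_l; auto).
    assert (eta 1%nat * INR N0 <= eta 1%nat * INR (PP k N)) by (apply Rmult_le_compat_l; lra).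
    lra. }
  assert (HW0 : W N0 = 0) by (apply Wz, Hbig; lia).
  assert (HW1 : W (S N0) = 0) by (apply Wz, Hbig; lia).
  pose proof (WS N0) as HS. rewrite HW0, HW1, Rplus_0_r in HS.
  assert (Hc : forall i, (i <= pred k)%nat -> c i = 0%Z).
  { apply (fin_lemma (pred k) c (fun i => aa k eta (S N0) (S i)) (GG N0)).
    - intros i Hi. apply aa_gap; lia.
    - intros i Hi. pose proof (Zs_ge i Hi). pose proof (Hbig N0 (le_n _)). lra.
    - unfold Rdiv. exact (eq_sym HS). }
  split; auto.
  assert (W 0%nat = 0).
  { unfold W. transitivity (sum_f_R0 (fun _ => 0) (pred k)).
    - apply sum_eq. intros i Hi. rewrite Hc by auto. ring.
    - rewrite sum_cte. ring. }
  apply eq_IZR. lra.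
Qed.

End Facts.

Theorem proposition2p7 (k : nat) (eta : nat -> R) :
  (1 <= k)%nat ->
  sum_f_R0 (fun i => eta (S i)) (k - 1) = 1 ->
  0 < eta 1%nat ->
  (forall i : nat, (1 <= i)%nat -> (i < k)%nat -> eta i <= eta (S i)) ->
  exists a : nat -> nat -> nat,
    (forall n j, (1 <= n)%nat -> (1 <= j <= k)%nat -> (1 <= a n j)%nat) /\
    (forall n j, (1 <= n)%nat -> (1 <= j)%nat -> (j < k)%nat ->
        (a n j < a n (S j))%nat) /\
    (forall n, (1 <= n)%nat -> (a n k < a (S n) 1%nat)%nat) /\
    is_lim_seq (fun n => (INR (a (S n) 1%nat) - INR (a n k)) / INR (a (S n) k))
      (eta 1%nat) /\
    (forall i, (2 <= i <= k)%nat ->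
      is_lim_seq (fun n => (INR (a n i) - INR (a n (pred i))) / INR (a n k))
        (eta i)) /\
    is_lim_seq (fun n => INR (a (S n) 1%nat) / INR (a n k)) p_infty /\
    Q_lin_indep k (fun j => if Nat.eqb j 0 then 1 else zeta a j).
Proof.
  intros Hk Hsum H1 Hmono.
  assert (Hs : ss eta k = 1).
  { destruct k; [lia|]. simpl ss. replace k with (S k - 1)%nat at 1 by lia. exact Hsum. }
  assert (He : forall i, (1 <= i <= k)%nat -> eta 1%nat <= eta i).
  { induction i; intros Hi; [lia|].
    destruct (Nat.eq_dec i 0) as [->|hne]; [lra|].
    pose proof (IHi ltac:(lia)). pose proof (Hmono i ltac:(lia) ltac:(lia)). lra. }
  exists (aa k eta).
  split; [|split; [|split; [|split; [|split; [|split]]]]].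
  - intros n j Hn Hj. destruct n; [lia|]. simpl. lia.
  - intros n j Hn Hj Hjk. destruct n; [lia|].
    pose proof (aa_gap k eta Hk Hs He H1 n j ltac:(lia)). unfold GG in H. lia.
  - intros n Hn. rewrite (aa_k k eta Hs), (aa1 k eta Hk). unfold GG. lia.
  - apply (lim4 k eta Hk Hs H1).
  - intros i Hi. apply (lim5 k eta Hk Hs He H1 i Hi).
  - apply (lim6 k eta Hk Hs H1).
  - intros q Hq j Hj.
    destruct (clear_den q k) as [D [z [HD Hz]]].
    assert (Hq' : Q2R (q 0%nat) * 1 +
        sum_f_R0 (fun i => Q2R (q (S i)) * zeta (aa k eta) (S i)) (pred k) = 0)
      by (rewrite decomp_sum in Hq by lia; exact Hq).
    assert (E : IZR (z 0%nat) + sum_f_R0 (fun i => IZR (z (S i)) * zeta (aa k eta) (S i)) (pred k) =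
        IZR D * (Q2R (q 0%nat) * 1 + sum_f_R0 (fun i => Q2R (q (S i)) * zeta (aa k eta) (S i)) (pred k))).
    { rewrite Rmult_plus_distr_l, scal_sum. rewrite <- (Hz 0%nat) by lia. f_equal; [ring|].
      apply sum_eq. intros i Hi. rewrite <- (Hz (S i)) by lia. ring. }
    rewrite Hq', Rmult_0_r in E.
    destruct (indep k eta Hk Hs He H1 (fun i => z (S i)) (z 0%nat) E) as [Hc Hz0].
    assert (Hzj : z j = 0%Z).
    { destruct j; auto. apply Hc. lia. }
    pose proof (Hz j Hj) as h. rewrite Hzj in h.
    assert (IZR D <> 0) by (apply not_0_IZR; lia).
    apply eqR_Qeq. replace (Q2R 0) with 0 by (unfold Q2R; simpl; field).
    apply Rmult_integral in h as [h|h]; auto. contradiction.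
Qed.
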